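(* Let $\{\alpha_k\}_{k=0}^n$ be arbitrary nonzero real numbers with $n\ge1$. Then there exist $b>0$, $\zeta\in\mathbb{R}$, and a $\sigma\in\Sigma_{1,b}$ such that $(\zeta,\{(\alpha_k,1,k)\}_{k=0}^n)$ is an affine symmetry of $\sigma$.
   Context: For $a,b>0$, $\Sigma_{a,b}$ is the class of meromorphic functions on $\mathbb{C}$ of the form $\sigma(z)=C+\sum_{k\in\mathbb{Z}}c_k[\mathrm{sgn}(k)+\tanh(\pi b^{-1}(z-ka))]$ with $C\in\mathbb{C}$, $\{c_k\}\subset\mathbb{C}$, $\sup_k|c_k|e^{-\pi a'|k|/b}<\infty$ for some $a'\in(0,a)$, at least one $c_k\ne0$, and $\mathrm{sgn}(0)=0$. An affine symmetry of $\sigma$ (viewed as a function on $\mathbb{R}$) is $(\zeta,\{(\alpha_s,\beta_s,\gamma_s)\}_{s\in\mathcal{I}})$ with $\mathcal{I}$ nonempty finite, real entries, such that $\sum_s\alpha_s\sigma(\beta_st+\gamma_s)=\zeta$ for all $t\in\mathbb{R}$, and there is no proper subset $\mathcal{I}'\subsetneq\mathcal{I}$ for which $\{\sigma(\beta_s\cdot+\gamma_s):s\in\mathcal{I}'\}\cup\{\mathbf1\}$ is linearly dependent as functions $\mathbb{R}\to\mathbb{C}$. *)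

(* Defs.v *)
From Stdlib Require Import Reals ZArith Lra.
From Coquelicot Require Import Coquelicot.
Open Scope R_scope.

Definition sgnZ (k : Z) : R := IZR (Z.sgn k).

(* Sum over Z: both halves (k >= 0 and k < 0) converge, with total l.
   (Under the growth condition of Sigma_{a,b} the series converges absolutely,
   so this is the unambiguous value of sum_{k in Z}.) *)
Definition is_zsum (u : Z -> C) (l : C) : Prop :=
  exists l1 l2 : C,
    is_series (fun n : nat => u (Z.of_nat n)) l1 /\
    is_series (fun n : nat => u (- Z.of_nat (S n))%Z) l2 /\
    l = Cplus l1 l2.

Definition sigma_term (a b : R) (c : Z -> C) (t : R) (k : Z) : C :=
  Cmult (c k) (RtoC (sgnZ k + tanh (PI / b * (t - IZR k * a)))).

Definition in_Sigma (a b : R) (sigma : R -> C) : Prop :=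
  0 < a /\ 0 < b /\
  exists (C0 : C) (c : Z -> C),
    (exists a' : R, 0 < a' < a /\
       exists M : R, forall k : Z,
         Cmod (c k) * exp (- PI * a' * IZR (Z.abs k) / b) <= M) /\
    (exists k : Z, c k <> RtoC 0) /\
    (forall t : R, exists l : C,
        is_zsum (sigma_term a b c t) l /\ sigma t = Cplus C0 l).

Fixpoint csum (f : nat -> C) (m : nat) : C :=
  match m with
  | O => RtoC 0
  | S m' => Cplus (csum f m') (f m')
  end.

(* The family {fs s : s in P} (P a subset of {0,..,m-1}) together with the
   constant function 1 is linearly dependent over C, as functions R -> C. *)
Definition lin_dep_with_one (m : nat) (P : nat -> Prop) (fs : nat -> R -> C) : Prop :=
  exists (lam : nat -> C) (mu : C),
    (forall s, ~ P s -> lam s = RtoC 0) /\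
    (mu <> RtoC 0 \/ exists s, (s < m)%nat /\ P s /\ lam s <> RtoC 0) /\
    (forall t : R, Cplus mu (csum (fun s => Cmult (lam s) (fs s t)) m) = RtoC 0).

Definition affine_symmetry (sigma : R -> C) (zeta : R) (m : nat)
    (alpha beta gamma : nat -> R) : Prop :=
  (0 < m)%nat /\
  (forall t : R,
      csum (fun s => Cmult (RtoC (alpha s)) (sigma (beta s * t + gamma s))) m
      = RtoC zeta) /\
  ~ (exists P : nat -> Prop,
        (forall s, P s -> (s < m)%nat) /\
        (exists s, (s < m)%nat /\ ~ P s) /\
        lin_dep_with_one m P (fun s t => sigma (beta s * t + gamma s))).

(* Main.v *)
Require Import Defs.
From Stdlib Require Import Reals ZArith.
From Coquelicot Require Import Coquelicot.
From Stdlib Require Import Lra Lia.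
Open Scope R_scope.

Fixpoint rsum (f : nat -> R) (m : nat) : R :=
  match m with O => 0 | S m' => rsum f m' + f m' end.

Lemma rsum_ext f g m : (forall i, (i < m)%nat -> f i = g i) -> rsum f m = rsum g m.
Proof. induction m; simpl; intros H; auto. rewrite IHm, H; auto. Qed.

Lemma rsum_plus f g m : rsum (fun i => f i + g i) m = rsum f m + rsum g m.
Proof. induction m; simpl. ring. rewrite IHm; ring. Qed.

Lemma rsum_scal a f m : rsum (fun i => a * f i) m = a * rsum f m.
Proof. induction m; simpl. ring. rewrite IHm; ring. Qed.

Lemma rsum_abs f m : Rabs (rsum f m) <= rsum (fun i => Rabs (f i)) m.
Proof. induction m; simpl. rewrite Rabs_R0; lra.
  eapply Rle_trans. apply Rabs_triang. lra. Qed.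

Lemma rsum_le f g m : (forall i, (i < m)%nat -> f i <= g i) -> rsum f m <= rsum g m.
Proof. induction m; simpl; intros H. lra. assert (f m <= g m) by auto.
  assert (rsum f m <= rsum g m) by auto. lra. Qed.

Lemma rsum_zero f m : (forall i, (i < m)%nat -> f i = 0) -> rsum f m = 0.
Proof. induction m; simpl; intros H. auto. rewrite IHm, H; auto. ring. Qed.

Lemma rsum_single f m p : (p < m)%nat -> (forall i, (i < m)%nat -> i <> p -> f i = 0) ->
  rsum f m = f p.
Proof. induction m; simpl; intros Hp H. lia.
  destruct (Nat.eq_dec p m) as [->|Hne].
  - rewrite rsum_zero. ring. intros i Hi. apply H; lia.
  - rewrite IHm. rewrite (H m) by lia. ring. lia. intros i Hi Hip. apply H; lia. Qed.

Lemma rsum_last f m : rsum f (S m) = rsum f m + f m.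
Proof. reflexivity. Qed.

Lemma rsum_shift_l f m : rsum f (S m) = f O + rsum (fun i => f (S i)) m.
Proof. induction m. simpl. ring. rewrite rsum_last, IHm. simpl. ring. Qed.

Lemma rsum_rev f m : rsum f m = rsum (fun i => f (m - 1 - i)%nat) m.
Proof. induction m. reflexivity.
  rewrite rsum_last, rsum_shift_l, IHm.
  replace (f (S m - 1 - 0)%nat) with (f m) by (f_equal; lia).
  rewrite Rplus_comm. f_equal. apply rsum_ext. intros i Hi. f_equal. lia. Qed.


Lemma csum_RtoC g m : csum (fun s => RtoC (g s)) m = RtoC (rsum g m).
Proof. induction m; simpl. reflexivity. rewrite IHm. rewrite RtoC_plus. reflexivity. Qed.

Lemma csum_Re f m : fst (csum f m) = rsum (fun i => fst (f i)) m.
Proof. induction m; simpl. reflexivity. rewrite <- IHm. reflexivity. Qed.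
Lemma csum_Im f m : snd (csum f m) = rsum (fun i => snd (f i)) m.
Proof. induction m; simpl. reflexivity. rewrite <- IHm. reflexivity. Qed.

Lemma is_series_RtoC (a : nat -> R) (l : R) :
  is_series a l -> is_series (fun n => RtoC (a n)) (RtoC l).
Proof.
  intros H. unfold is_series in *.
  assert (E : forall N, sum_n (fun n => RtoC (a n)) N = (sum_n a N, 0)).
  { induction N.
    - rewrite !sum_O. reflexivity.
    - rewrite !sum_Sn, IHN. unfold plus. simpl. unfold Cplus. simpl. f_equal. ring. }
  eapply filterlim_ext. intros N. symmetry. apply E.
  intros P [eps HP].
  destruct (H (ball l eps) (locally_ball l eps)) as [N HN].
  exists N. intros m Hm. apply HP. split. apply HN, Hm. simpl. apply ball_center.
Qed.

Definition zpos (u : Z -> R) := fun n : nat => u (Z.of_nat n).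
Definition zneg (u : Z -> R) := fun n : nat => u (- Z.of_nat (S n))%Z.
Definition zconv u := ex_series (zpos u) /\ ex_series (zneg u).
Definition zsum u := Series (zpos u) + Series (zneg u).

Lemma zconv_ext u v : (forall k, u k = v k) -> zconv u -> zconv v.
Proof. intros H [H1 H2]. split.
  eapply ex_series_ext. 2: apply H1. intros; unfold zpos; auto.
  eapply ex_series_ext. 2: apply H2. intros; unfold zneg; auto. Qed.

Lemma zsum_ext u v : (forall k, u k = v k) -> zsum u = zsum v.
Proof. intros H. unfold zsum. f_equal; apply Series_ext; intros; unfold zpos, zneg; auto. Qed.

Lemma zconv_plus u v : zconv u -> zconv v -> zconv (fun k => u k + v k).
Proof. intros [H1 H2] [H3 H4]. split.
  apply (ex_series_plus (zpos u) (zpos v)); auto.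
  apply (ex_series_plus (zneg u) (zneg v)); auto. Qed.

Lemma zsum_plus u v : zconv u -> zconv v -> zsum (fun k => u k + v k) = zsum u + zsum v.
Proof. intros [H1 H2] [H3 H4]. unfold zsum, zpos, zneg in *.
  rewrite (Series_plus (fun n => u (Z.of_nat n)) (fun n => v (Z.of_nat n))) by auto.
  rewrite (Series_plus (fun n => u (- Z.of_nat (S n))%Z) (fun n => v (- Z.of_nat (S n))%Z)) by auto. ring. Qed.

Lemma zconv_scal a u : zconv u -> zconv (fun k => a * u k).
Proof. intros [H1 H2]. split.
  apply (ex_series_scal_l (V:=R_NormedModule) a (zpos u)); auto.
  apply (ex_series_scal_l (V:=R_NormedModule) a (zneg u)); auto. Qed.

Lemma zsum_scal a u : zsum (fun k => a * u k) = a * zsum u.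
Proof. unfold zsum, zpos, zneg.
  rewrite (Series_scal_l a (fun n => u (Z.of_nat n))), (Series_scal_l a (fun n => u (- Z.of_nat (S n))%Z)). ring. Qed.

Lemma is_series_zero : is_series (fun _ : nat => 0) 0.
Proof. assert (H := is_series_scal_r 0 _ _ (is_series_geom (/2) ltac:(rewrite Rabs_pos_eq; lra))).
  rewrite Rmult_0_r in H. eapply is_series_ext. 2: apply H. intros; simpl. apply Rmult_0_r. Qed.

Lemma zconv_rsum (a : nat -> R) (u : nat -> Z -> R) m :
  (forall s, (s < m)%nat -> zconv (u s)) ->
  zconv (fun k => rsum (fun s => a s * u s k) m) /\
  zsum (fun k => rsum (fun s => a s * u s k) m) = rsum (fun s => a s * zsum (u s)) m.
Proof. induction m; intros H; simpl.
  - split. split; apply ex_series_ext with (fun _ => 0); auto; exists 0; apply is_series_zero; auto.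
    unfold zsum. rewrite (Series_ext (zpos _) (fun _ => 0)) by auto.
    rewrite (Series_ext (zneg _) (fun _ => 0)) by auto.
    rewrite (is_series_unique _ _ is_series_zero). ring.
  - destruct IHm as [C1 E1]. intros; apply H; lia.
    assert (C2 : zconv (fun k => a m * u m k)) by (apply zconv_scal, H; lia).
    split. apply (zconv_plus _ _ C1 C2).
    rewrite (zsum_plus _ _ C1 C2). rewrite E1, zsum_scal. reflexivity. Qed.

Lemma zpos_shift1 u n : zpos (fun k => u (k + 1)%Z) n = zpos u (S n).
Proof. unfold zpos. f_equal. lia. Qed.
Lemma zneg_shift1_S u n : zneg (fun k => u (k + 1)%Z) (S n) = zneg u n.
Proof. unfold zneg. f_equal. lia. Qed.
Lemma zneg_shift1_0 u : zneg (fun k => u (k + 1)%Z) O = u 0%Z.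
Proof. unfold zneg. f_equal. Qed.

Lemma zconv_shift1 u : zconv u <-> zconv (fun k => u (k + 1)%Z).
Proof. unfold zconv. split; intros [H1 H2]; split.
  - eapply ex_series_ext. intros n; symmetry; apply zpos_shift1. apply ex_series_incr_1 in H1; exact H1.
  - apply ex_series_incr_1. eapply ex_series_ext. intros n; symmetry; apply zneg_shift1_S. exact H2.
  - apply ex_series_incr_1. eapply ex_series_ext. intros n; apply zpos_shift1. exact H1.
  - apply ex_series_incr_1 in H2. eapply ex_series_ext. intros n; apply zneg_shift1_S. exact H2.
Qed.

Lemma zsum_shift1 u : zconv u -> zsum (fun k => u (k + 1)%Z) = zsum u.
Proof. intros H. pose proof H as H'. apply zconv_shift1 in H'. destruct H as [H1 H2], H' as [H3 H4].
  unfold zsum.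
  rewrite (Series_incr_1 (zpos u)) by auto.
  rewrite (Series_incr_1 (zneg (fun k => u (k + 1)%Z))) by auto.
  rewrite zneg_shift1_0.
  rewrite (Series_ext (fun k => zneg (fun k0 => u (k0 + 1)%Z) (S k)) (zneg u)) by apply zneg_shift1_S.
  rewrite (Series_ext (zpos (fun k => u (k + 1)%Z)) (fun k => zpos u (S k))) by apply zpos_shift1.
  change (zpos u 0) with (u 0%Z). ring. Qed.

Lemma zshift_nat (s : nat) : forall u, (zconv u <-> zconv (fun k => u (k + Z.of_nat s)%Z)) /\
  (zconv u -> zsum (fun k => u (k + Z.of_nat s)%Z) = zsum u).
Proof. induction s; intros u.
  - split. split; apply zconv_ext; intros; f_equal; lia.
    intros _. apply zsum_ext; intros; f_equal; lia.
  - destruct (IHs (fun k => u (k + 1)%Z)) as [A B].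
    assert (E : forall k, u (k + Z.of_nat (S s))%Z = u (k + Z.of_nat s + 1)%Z) by (intros; f_equal; lia).
    split.
    + rewrite zconv_shift1, A. split; apply zconv_ext; intros; rewrite E; auto.
    + intros H. rewrite (zsum_ext _ (fun k => u (k + Z.of_nat s + 1)%Z)) by auto.
      rewrite B. exact (zsum_shift1 u H). apply (proj1 (zconv_shift1 u)), H.
Qed.

Lemma zshift_Z (j : Z) u : zconv (fun k => u (k + j)%Z) -> zsum u = zsum (fun k => u (k + j)%Z).
Proof. intros H. destruct (Z_le_gt_dec 0 j) as [Hj|Hj].
  - replace j with (Z.of_nat (Z.to_nat j)) in * by lia.
    destruct (zshift_nat (Z.to_nat j) u) as [A B]. symmetry; apply B, A, H.
  - set (v := fun k => u (k + j)%Z).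
    destruct (zshift_nat (Z.to_nat (- j)) v) as [A B].
    rewrite <- (B H). apply zsum_ext. intros k; unfold v; f_equal; lia.
Qed.

Lemma series_geom_bound (a : nat -> R) (C q : R) : 0 <= q < 1 ->
  (forall n, Rabs (a n) <= C * q ^ (S n)) ->
  ex_series a /\ Rabs (Series a) <= C * q / (1 - q).
Proof. intros Hq H.
  assert (G : is_series (fun n => C * q ^ (S n)) (C * q / (1 - q))).
  { replace (C * q / (1 - q)) with ((C * q) * / (1 - q)) by (field; lra).
    eapply is_series_ext. 2: apply (is_series_scal_l (V:=R_NormedModule) (C * q)), is_series_geom.
    intros n. simpl. unfold scal; simpl; unfold mult; simpl. ring. rewrite Rabs_pos_eq; lra. }
  assert (E : ex_series (fun n => Rabs (a n))).
  { apply (ex_series_le (V:=R_CompleteNormedModule) _ (fun n => C * q ^ (S n))). intros n.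
    unfold norm; simpl. rewrite Rabs_Rabsolu. auto. exists (C * q / (1 - q)); auto. }
  split. apply ex_series_Rabs, E.
  eapply Rle_trans. apply Series_Rabs, E.
  rewrite <- (is_series_unique _ _ G). apply Series_le. intros n; split. apply Rabs_pos. auto.
  exists (C * q / (1 - q)); auto. Qed.

Lemma zgeom u (C q : R) : 0 <= q < 1 ->
  (forall k, (k <> 0)%Z -> Rabs (u k) <= C * q ^ (Z.abs_nat k)) ->
  zconv u /\ Rabs (zsum u - u 0%Z) <= 2 * (C * q / (1 - q)).
Proof. intros Hq H.
  destruct (series_geom_bound (fun n => zpos u (S n)) C q Hq) as [A1 B1].
  { intros n. unfold zpos. replace (S n) with (Z.abs_nat (Z.of_nat (S n))) at 2 by lia. apply H. lia. }
  destruct (series_geom_bound (zneg u) C q Hq) as [A2 B2].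
  { intros n. unfold zneg. replace (S n) with (Z.abs_nat (- Z.of_nat (S n))) at 2 by lia. apply H. lia. }
  assert (C1 : zconv u). { split; auto. apply ex_series_incr_1; auto. }
  split; auto. unfold zsum. rewrite Series_incr_1 by apply C1.
  unfold zpos at 1. simpl Z.of_nat.
  replace (u 0%Z + Series (fun k => zpos u (S k)) + Series (zneg u) - u 0%Z)
    with (Series (fun k => zpos u (S k)) + Series (zneg u)) by ring.
  eapply Rle_trans. apply Rabs_triang. lra. Qed.

Fixpoint Wr (beta : nat -> R) (n : nat) (w0 : nat -> R) (m : nat) : nat -> R :=
  match m with
  | O => w0
  | S m' => fun i => if (S i <? n)%nat then Wr beta n w0 m' (S i)
            else - rsum (fun j => beta j * Wr beta n w0 m' j) n / beta n
  end.
Definition xr beta n w0 m := Wr beta n w0 m O.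

Lemma Wr_shift beta n w0 : forall i m, (i < n)%nat -> Wr beta n w0 m i = xr beta n w0 (m + i).
Proof. induction i; intros m Hi.
  - unfold xr. rewrite Nat.add_0_r. reflexivity.
  - replace (Wr beta n w0 m (S i)) with (Wr beta n w0 (S m) i).
    rewrite IHi by lia. f_equal. lia.
    simpl. replace (S i <? n)%nat with true. reflexivity. symmetry. apply Nat.ltb_lt. lia.
Qed.

Lemma xr_init beta n w0 i : (i < n)%nat -> xr beta n w0 i = w0 i.
Proof. intros H. rewrite <- (Nat.add_0_l i), <- Wr_shift by auto. reflexivity. Qed.

Lemma xr_rec beta n w0 m : (1 <= n)%nat -> beta n <> 0 ->
  rsum (fun j => beta j * xr beta n w0 (m + j)) (S n) = 0.
Proof. intros Hn Hb. rewrite rsum_last.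
  replace (xr beta n w0 (m + n)) with (Wr beta n w0 (S m) (n - 1)).
  2:{ rewrite Wr_shift by lia. f_equal. lia. }
  simpl. replace (S (n - 1) <? n)%nat with false.
  2:{ symmetry. apply Nat.ltb_ge. lia. }
  rewrite (rsum_ext (fun j => beta j * Wr beta n w0 m j) (fun j => beta j * xr beta n w0 (m + j))).
  field. auto. intros i Hi. rewrite Wr_shift by auto. reflexivity. Qed.

Lemma xr_bound beta n w0 : (1 <= n)%nat -> beta n <> 0 ->
  (forall i, (i < n)%nat -> Rabs (w0 i) <= 1) ->
  forall m, Rabs (xr beta n w0 m) <= (1 + rsum (fun j => Rabs (beta j)) n / Rabs (beta n)) ^ m.
Proof. intros Hn Hb Hw.
  set (A := 1 + rsum (fun j => Rabs (beta j)) n / Rabs (beta n)).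
  assert (HS : 0 <= rsum (fun j => Rabs (beta j)) n).
  { rewrite <- (rsum_zero (fun _ => 0) n) by auto. apply rsum_le. intros; apply Rabs_pos. }
  assert (Hbp : 0 < Rabs (beta n)) by (apply Rabs_pos_lt; auto).
  assert (HA : 1 <= A). { unfold A. assert (0 <= rsum (fun j => Rabs (beta j)) n / Rabs (beta n)).
    apply Rdiv_le_0_compat; lra. lra. }
  assert (K : forall m i, (i < n)%nat -> Rabs (Wr beta n w0 m i) <= A ^ m).
  { induction m; intros i Hi.
    - simpl. auto.
    - simpl. destruct (S i <? n)%nat eqn:E.
      + apply Nat.ltb_lt in E. eapply Rle_trans. apply IHm; auto.
        rewrite <- (Rmult_1_l (A ^ m)) at 1. apply Rmult_le_compat_r. apply pow_le; lra. auto.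
      + unfold Rdiv. rewrite Rabs_mult, Rabs_Ropp, Rabs_inv.
        assert (R1 : Rabs (rsum (fun j => beta j * Wr beta n w0 m j) n) <=
                rsum (fun j => Rabs (beta j)) n * A ^ m).
        { eapply Rle_trans. apply rsum_abs. rewrite Rmult_comm, <- rsum_scal.
          apply rsum_le. intros j Hj. rewrite Rabs_mult, Rmult_comm.
          apply Rmult_le_compat_r. apply Rabs_pos. auto. }
        apply Rle_trans with (rsum (fun j => Rabs (beta j)) n * A ^ m * / Rabs (beta n)).
        apply Rmult_le_compat_r. left; apply Rinv_0_lt_compat; auto. auto.
        replace (rsum (fun j => Rabs (beta j)) n * A ^ m * / Rabs (beta n)) with
          ((A - 1) * A ^ m) by (unfold A; field; lra).
        assert (0 <= A ^ m) by (apply pow_le; lra). nra. }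
  intros m. unfold xr. apply K. lia. Qed.

Section CC.
Variable n : nat.
Variable alpha : nat -> R.

Definition winf i := if Nat.eqb i (n - 1) then 1 else 0.
Definition winb i := if Nat.eqb i 0 then 1 else 0.
Definition xf := xr alpha n winf.
Definition yb := xr (fun i => alpha (n - i)%nat) n winb.
Definition cc (k : Z) : R :=
  if Z.leb 0 k then xf (Z.to_nat k) else yb (Z.to_nat (Z.of_nat n - 1 - k)).

Hypothesis Hn : (1 <= n)%nat.
Hypothesis H0 : alpha 0%nat <> 0.
Hypothesis HN : alpha n <> 0.

Lemma cc_pos k : (0 <= k)%Z -> cc k = xf (Z.to_nat k).
Proof. intros H. unfold cc. replace (Z.leb 0 k) with true. auto. symmetry; apply Z.leb_le; auto. Qed.

Lemma cc_neg k : (k <= Z.of_nat n - 1)%Z -> cc k = yb (Z.to_nat (Z.of_nat n - 1 - k)).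
Proof. intros H. unfold cc. destruct (Z.leb 0 k) eqn:E; auto.
  apply Z.leb_le in E. unfold xf, yb. rewrite !xr_init by lia.
  unfold winf, winb. destruct (Nat.eqb (Z.to_nat k) (n - 1)) eqn:E1;
  destruct (Nat.eqb (Z.to_nat (Z.of_nat n - 1 - k)) 0) eqn:E2; auto.
  apply Nat.eqb_eq in E1. apply Nat.eqb_neq in E2. lia.
  apply Nat.eqb_neq in E1. apply Nat.eqb_eq in E2. lia. Qed.

Lemma cc_init i : (i < n)%nat -> cc (Z.of_nat i) = winf i.
Proof. intros H. rewrite cc_pos by lia. unfold xf. rewrite xr_init by lia. f_equal. lia. Qed.

Lemma cc_rec k : rsum (fun j => alpha j * cc (k + Z.of_nat j)) (S n) = 0.
Proof. destruct (Z_le_gt_dec 0 k) as [Hk|Hk].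
  - rewrite <- (xr_rec alpha n winf (Z.to_nat k)) by auto.
    apply rsum_ext. intros j Hj. rewrite cc_pos by lia. unfold xf. f_equal. f_equal. lia.
  - set (m := Z.to_nat (- k - 1)).
    assert (R := xr_rec (fun i => alpha (n - i)%nat) n winb m Hn).
    assert (H0' : alpha (n - n)%nat <> 0) by (rewrite Nat.sub_diag; auto).
    specialize (R H0').
    rewrite rsum_rev in R. rewrite <- R. apply rsum_ext. intros j Hj.
    replace (S n - 1 - j)%nat with (n - j)%nat by lia.
    replace (n - (n - j))%nat with j by lia. rewrite cc_neg by lia.
    unfold yb. f_equal. f_equal. lia. Qed.

Lemma cc_bound : exists K, 1 <= K /\ forall k, Rabs (cc k) <= K ^ (n + Z.abs_nat k).
Proof.
  assert (W1 : forall i, (i < n)%nat -> Rabs (winf i) <= 1).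
  { intros i _. unfold winf. destruct (Nat.eqb i (n-1)); rewrite ?Rabs_R1, ?Rabs_R0; lra. }
  assert (W2 : forall i, (i < n)%nat -> Rabs (winb i) <= 1).
  { intros i _. unfold winb. destruct (Nat.eqb i 0); rewrite ?Rabs_R1, ?Rabs_R0; lra. }
  assert (B1 := xr_bound alpha n winf Hn HN W1).
  assert (HN' : alpha (n - n)%nat <> 0) by (rewrite Nat.sub_diag; auto).
  assert (B2 := xr_bound (fun i => alpha (n - i)%nat) n winb Hn HN' W2).
  set (A := 1 + rsum (fun j => Rabs (alpha j)) n / Rabs (alpha n)) in B1.
  set (B := 1 + rsum (fun j => Rabs (alpha (n - j)%nat)) n / Rabs (alpha (n - n)%nat)) in B2.
  assert (HA : 1 <= A). { specialize (B1 O). simpl in B1. unfold xr in B1. simpl in B1.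
    unfold A. assert (0 <= rsum (fun j => Rabs (alpha j)) n).
    { rewrite <- (rsum_zero (fun _ => 0) n) by auto. apply rsum_le. intros; apply Rabs_pos. }
    assert (0 <= rsum (fun j => Rabs (alpha j)) n / Rabs (alpha n)).
    apply Rdiv_le_0_compat; auto. apply Rabs_pos_lt; auto. lra. }
  assert (HB : 1 <= B). { unfold B. assert (0 <= rsum (fun j => Rabs (alpha (n - j)%nat)) n).
    { rewrite <- (rsum_zero (fun _ => 0) n) by auto. apply rsum_le. intros; apply Rabs_pos. }
    assert (0 <= rsum (fun j => Rabs (alpha (n-j)%nat)) n / Rabs (alpha (n - n)%nat)).
    apply Rdiv_le_0_compat; auto. apply Rabs_pos_lt; auto. lra. }
  exists (Rmax A B). split. eapply Rle_trans. apply HA. apply Rmax_l.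
  intros k. destruct (Z_le_gt_dec 0 k) as [Hk|Hk].
  - rewrite cc_pos by auto. unfold xf. eapply Rle_trans. apply B1.
    eapply Rle_trans. apply pow_incr. split. lra. apply Rmax_l.
    apply Rle_pow. eapply Rle_trans. apply HA. apply Rmax_l. lia.
  - rewrite cc_neg by lia. unfold yb. eapply Rle_trans. apply B2.
    eapply Rle_trans. apply pow_incr. split. lra. apply Rmax_r.
    apply Rle_pow. eapply Rle_trans. apply HA. apply Rmax_l. lia.
Qed.

End CC.

Lemma le_div a b c : 0 < c -> a * c <= b -> a <= b / c.
Proof. intros Hc H. replace a with ((a * c) * / c) by (field; lra). unfold Rdiv.
  apply Rmult_le_compat_r. left; apply Rinv_0_lt_compat; auto. auto. Qed.
Lemma div_le a b c : 0 < c -> b <= a * c -> b / c <= a.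
Proof. intros Hc H. replace a with ((a * c) * / c) by (field; lra). unfold Rdiv.
  apply Rmult_le_compat_r. left; apply Rinv_0_lt_compat; auto. auto. Qed.

Lemma exp_nat y N : exp (INR N * y) = exp y ^ N.
Proof. induction N. simpl. rewrite Rmult_0_l, exp_0. reflexivity.
  rewrite S_INR. replace ((INR N + 1) * y) with (INR N * y + y) by ring.
  rewrite exp_plus, IHN. simpl. ring. Qed.

Lemma exp2 y : exp (2 * y) = exp y * exp y.
Proof. replace (2 * y) with (y + y) by ring. apply exp_plus. Qed.

Lemma tanh_X y : tanh y = (exp y * exp y - 1) / (exp y * exp y + 1).
Proof. unfold tanh, sinh, cosh. rewrite exp_Ropp. assert (0 < exp y) by apply exp_pos.
  field. split; nra. Qed.

Lemma tanh_abs y : Rabs (tanh y) <= 1.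
Proof. rewrite tanh_X. assert (0 < exp y) by apply exp_pos. set (X := exp y) in *.
  apply Rabs_le. split.
  - apply le_div; nra.
  - apply div_le; nra. Qed.

Lemma tanh_p1 y : Rabs (1 + tanh y) <= 2 * exp (2 * y).
Proof. rewrite tanh_X, exp2. assert (0 < exp y) by apply exp_pos. set (X := exp y) in *.
  replace (1 + (X * X - 1) / (X * X + 1)) with (2 * (X * X) / (X * X + 1)) by (field; nra).
  rewrite Rabs_pos_eq. 2:{ apply Rdiv_le_0_compat; nra. }
  apply div_le; nra. Qed.

Lemma tanh_m1 y : Rabs (tanh y - 1) <= 2 * exp (- (2 * y)).
Proof. rewrite tanh_X, exp_Ropp, exp2. assert (0 < exp y) by apply exp_pos. set (X := exp y) in *.
  replace ((X * X - 1) / (X * X + 1) - 1) with (- (2 / (X * X + 1))) by (field; nra).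
  rewrite Rabs_Ropp, Rabs_pos_eq. 2:{ apply Rdiv_le_0_compat; nra. }
  unfold Rdiv. apply Rmult_le_compat_l. lra. apply Rinv_le_contravar; nra. Qed.

Lemma tanh_half y : 3 <= exp (2 * y) -> 1/2 <= tanh y.
Proof. rewrite tanh_X, exp2. intros H. assert (0 < exp y) by apply exp_pos. set (X := exp y) in *.
  apply le_div; nra. Qed.

Lemma tanh_opp y : tanh (- y) = - tanh y.
Proof. unfold tanh, sinh, cosh. rewrite Ropp_involutive.
  assert (0 < exp y) by apply exp_pos. assert (0 < exp (-y)) by apply exp_pos. field. lra. Qed.

Definition sgnR (k : Z) : R := IZR (Z.sgn k).

Lemma IZR_abs_nat k : IZR (Z.abs k) = INR (Z.abs_nat k).
Proof. rewrite INR_IZR_INZ. f_equal. lia. Qed.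

Lemma term_bound tau t k : 0 < tau ->
  Rabs (sgnZ k + tanh (tau * (t - IZR k * 1))) <=
  2 * exp (2 * tau * Rabs t) * exp (- 2 * tau) ^ (Z.abs_nat k).
Proof. intros Ht. rewrite <- exp_nat.
  assert (Et : exp (2 * tau * t) <= exp (2 * tau * Rabs t)).
  { destruct (Rle_lt_or_eq_dec _ _ (Rle_abs t)) as [h|h].
    left; apply exp_increasing; nra. rewrite <- h; lra. }
  assert (Et' : exp (- 2 * tau * t) <= exp (2 * tau * Rabs t)).
  { destruct (Rle_lt_or_eq_dec _ _ (Rle_abs (- t))) as [h|h]; rewrite Rabs_Ropp in h.
    left; apply exp_increasing; nra. right; f_equal. rewrite <- h. ring. }
  destruct (Z.lt_trichotomy k 0) as [Hk|[Hk|Hk]].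
  - unfold sgnZ. rewrite (Z.sgn_neg k Hk). 
    replace (IZR (-1) + tanh (tau * (t - IZR k * 1))) with (tanh (tau * (t - IZR k * 1)) - 1) by (simpl; ring).
    eapply Rle_trans. apply tanh_m1.
    replace (- (2 * (tau * (t - IZR k * 1)))) with (- 2 * tau * t + INR (Z.abs_nat k) * (-2 * tau)).
    rewrite exp_plus. assert (0 < exp (INR (Z.abs_nat k) * (-2 * tau))) by apply exp_pos. nra.
    rewrite <- IZR_abs_nat. rewrite Z.abs_neq by lia. rewrite opp_IZR. ring.
  - subst. unfold sgnZ. simpl. rewrite (Rmult_0_l (-2 * tau)), exp_0, Rplus_0_l.
    eapply Rle_trans. apply tanh_abs. assert (1 <= exp (2 * tau * Rabs t)).
    { rewrite <- exp_0. destruct (Rle_lt_or_eq_dec 0 (2 * tau * Rabs t)).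
      assert (0 <= Rabs t) by apply Rabs_pos. nra. left; apply exp_increasing; auto. rewrite e; lra. }
    lra.
  - unfold sgnZ. rewrite (Z.sgn_pos k Hk).
    replace (IZR 1 + tanh (tau * (t - IZR k * 1))) with (1 + tanh (tau * (t - IZR k * 1))) by (simpl; ring).
    eapply Rle_trans. apply tanh_p1.
    replace (2 * (tau * (t - IZR k * 1))) with (2 * tau * t + INR (Z.abs_nat k) * (-2 * tau)).
    rewrite exp_plus. assert (0 < exp (INR (Z.abs_nat k) * (-2 * tau))) by apply exp_pos. nra.
    rewrite <- IZR_abs_nat. rewrite Z.abs_eq by lia. ring.
Qed.

Lemma psi_bound tau m : 0 < tau ->
  Rabs (tanh (tau * (IZR m + /2)) - tanh (tau * (IZR m - /2))) <=
  4 * exp tau * exp (- 2 * tau) ^ (Z.abs_nat m).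
Proof. intros Ht. rewrite <- exp_nat.
  assert (E1 : 1 <= exp tau). { rewrite <- exp_0. left; apply exp_increasing; auto. }
  assert (E2 : exp (- tau) <= exp tau). { left; apply exp_increasing; lra. }
  destruct (Z.lt_trichotomy m 0) as [Hk|[Hk|Hk]].
  - replace (tanh (tau * (IZR m + /2)) - tanh (tau * (IZR m - /2))) with
      ((1 + tanh (tau * (IZR m + /2))) - (1 + tanh (tau * (IZR m - /2)))) by ring.
    eapply Rle_trans. apply Rabs_triang. rewrite Rabs_Ropp.
    assert (A1 := tanh_p1 (tau * (IZR m + /2))). assert (A2 := tanh_p1 (tau * (IZR m - /2))).
    assert (e1 : 2 * (tau * (IZR m + /2)) = tau + INR (Z.abs_nat m) * (-2 * tau))
      by (rewrite <- IZR_abs_nat, Z.abs_neq by lia; rewrite opp_IZR; field).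
    assert (e2 : 2 * (tau * (IZR m - /2)) = - tau + INR (Z.abs_nat m) * (-2 * tau))
      by (rewrite <- IZR_abs_nat, Z.abs_neq by lia; rewrite opp_IZR; field).
    rewrite e1 in A1. rewrite e2 in A2.
    rewrite exp_plus in A1, A2. assert (0 < exp (INR (Z.abs_nat m) * (-2 * tau))) by apply exp_pos. nra.
  - subst. simpl. rewrite Rmult_0_l, exp_0.
    assert (A1 := tanh_abs (tau * (0 + /2))). assert (A2 := tanh_abs (tau * (0 - /2))).
    eapply Rle_trans. apply Rabs_triang. rewrite Rabs_Ropp. lra.
  - replace (tanh (tau * (IZR m + /2)) - tanh (tau * (IZR m - /2))) with
      ((tanh (tau * (IZR m + /2)) - 1) - (tanh (tau * (IZR m - /2)) - 1)) by ring.
    eapply Rle_trans. apply Rabs_triang. rewrite Rabs_Ropp.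
    assert (A1 := tanh_m1 (tau * (IZR m + /2))). assert (A2 := tanh_m1 (tau * (IZR m - /2))).
    assert (e1 : - (2 * (tau * (IZR m + /2))) = - tau + INR (Z.abs_nat m) * (-2 * tau))
      by (rewrite <- IZR_abs_nat, Z.abs_eq by lia; field).
    assert (e2 : - (2 * (tau * (IZR m - /2))) = tau + INR (Z.abs_nat m) * (-2 * tau))
      by (rewrite <- IZR_abs_nat, Z.abs_eq by lia; field).
    rewrite e1 in A1. rewrite e2 in A2.
    rewrite exp_plus in A1, A2. assert (0 < exp (INR (Z.abs_nat m) * (-2 * tau))) by apply exp_pos. nra.
Qed.

Section Main.
Variable n : nat.
Variable alpha : nat -> R.
Hypothesis Hn : (1 <= n)%nat.
Hypothesis H0 : alpha 0%nat <> 0.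
Hypothesis HN : alpha n <> 0.
Variable K : R.
Hypothesis HK1 : 1 <= K.
Hypothesis HK : forall k, Rabs (cc n alpha k) <= K ^ (n + Z.abs_nat k).

Let c := cc n alpha.
Definition qq := 64 * (K * K).
Definition tau := ln qq.
Definition bb := PI / tau.
Definition rr := K * exp (- 2 * tau).

Lemma qq_gt : 64 <= qq.
Proof. unfold qq. nra. Qed.
Lemma exp_tau : exp tau = qq.
Proof. unfold tau. apply exp_ln. pose proof qq_gt; lra. Qed.
Lemma tau_pos : 0 < tau.
Proof. unfold tau. rewrite <- ln_1. apply ln_increasing. lra. pose proof qq_gt; lra. Qed.
Lemma bb_pos : 0 < bb.
Proof. unfold bb. pose proof tau_pos. pose proof PI_RGT_0. apply Rdiv_lt_0_compat; lra. Qed.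
Lemma PI_bb : PI / bb = tau.
Proof. unfold bb. pose proof tau_pos. pose proof PI_RGT_0. field. lra. Qed.
Lemma exp_m2tau : exp (- 2 * tau) = / (qq * qq).
Proof. replace (- 2 * tau) with (- (tau + tau)) by ring. rewrite exp_Ropp, exp_plus, exp_tau. reflexivity. Qed.
Lemma rr_facts : 0 <= rr /\ rr <= / 2 /\ qq * rr <= / 64.
Proof. unfold rr. rewrite exp_m2tau. pose proof qq_gt. unfold qq in *.
  assert (0 < K * K) by nra.
  split. apply Rmult_le_pos. lra. left; apply Rinv_0_lt_compat; nra.
  replace (K * / (64 * (K * K) * (64 * (K * K)))) with (/ (4096 * (K * (K * K)))) by (field; lra).
  replace (64 * (K * K) * / (4096 * (K * (K * K)))) with (/ (64 * K)) by (field; lra).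
  split; apply Rinv_le_contravar; nra. Qed.

Definition uR (t : R) (k : Z) : R := c k * (sgnZ k + tanh (PI / bb * (t - IZR k * 1))).
Definition sigR (t : R) : R := zsum (uR t).

Lemma uR_bound t k : Rabs (uR t k) <= (K ^ n * (2 * exp (2 * tau * Rabs t))) * rr ^ (Z.abs_nat k).
Proof. unfold uR. rewrite Rabs_mult, PI_bb.
  assert (T := term_bound tau t k tau_pos).
  unfold rr. rewrite Rpow_mult_distr.
  replace (K ^ n * (2 * exp (2 * tau * Rabs t)) * (K ^ Z.abs_nat k * exp (-2 * tau) ^ Z.abs_nat k))
    with ((K ^ (n + Z.abs_nat k)) * (2 * exp (2 * tau * Rabs t) * exp (- 2 * tau) ^ (Z.abs_nat k)))
    by (rewrite pow_add; ring).
  apply Rmult_le_compat; auto; apply Rabs_pos. Qed.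

Lemma uR_conv t : zconv (uR t).
Proof. destruct rr_facts as [A [B _]].
  apply (zgeom (uR t) (K ^ n * (2 * exp (2 * tau * Rabs t))) rr). lra. intros k _. apply uR_bound. Qed.

Lemma IZR_add_nat k s : IZR (k + Z.of_nat s) = IZR k + INR s.
Proof. rewrite plus_IZR, <- INR_IZR_INZ. reflexivity. Qed.

Lemma Sym t : rsum (fun s => alpha s * sigR (t + INR s)) (S n) =
  zsum (fun k => rsum (fun s => alpha s * (c (k + Z.of_nat s)%Z * sgnZ (k + Z.of_nat s))) (S n)).
Proof.
  set (v := fun s k => uR (t + INR s) (k + Z.of_nat s)%Z).
  assert (Cv : forall s, (s < S n)%nat -> zconv (v s)).
  { intros s _. apply (zshift_nat s (uR (t + INR s))), uR_conv. }
  rewrite (rsum_ext _ (fun s => alpha s * zsum (v s))).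
  2:{ intros s _. f_equal. unfold v, sigR. symmetry. apply (zshift_nat s (uR (t + INR s))), uR_conv. }
  destruct (zconv_rsum alpha v (S n) Cv) as [_ E]. rewrite <- E.
  apply zsum_ext. intros k. unfold v, uR.
  set (T := tanh (PI / bb * (t - IZR k * 1))).
  rewrite (rsum_ext _ (fun s => alpha s * (c (k + Z.of_nat s)%Z * sgnZ (k + Z.of_nat s)) + T * (alpha s * c (k + Z.of_nat s)%Z))).
  rewrite rsum_plus, rsum_scal. unfold c. rewrite cc_rec by auto. ring.
  intros s _. unfold T. rewrite IZR_add_nat.
  replace (t + INR s - (IZR k + INR s) * 1) with (t - IZR k * 1) by ring. ring.
Qed.


Lemma rsum_minus f g m : rsum (fun i => f i - g i) m = rsum f m - rsum g m.
Proof. induction m; simpl. ring. rewrite IHm; ring. Qed.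

Lemma zconv_minus u v : zconv u -> zconv v ->
  zconv (fun k => u k - v k) /\ zsum (fun k => u k - v k) = zsum u - zsum v.
Proof. intros Hu Hv. assert (Hv' := zconv_scal (-1) v Hv).
  assert (E : forall k, u k - v k = u k + (-1) * v k) by (intros; ring).
  split. eapply zconv_ext. intros k; symmetry; apply E. apply zconv_plus; auto.
  rewrite (zsum_ext _ (fun k => u k + (-1) * v k)) by auto.
  rewrite zsum_plus, zsum_scal by auto. ring. Qed.

Definition Psi (j k : Z) := tanh (tau * (IZR j - IZR k + /2)) - tanh (tau * (IZR j - IZR k - /2)).

Lemma Dsig_shift j s :
  zconv (fun k => c (k + Z.of_nat s)%Z * Psi j k) /\
  sigR (IZR j + INR s + /2) - sigR (IZR j + INR s - /2) = zsum (fun k => c (k + Z.of_nat s)%Z * Psi j k).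
Proof.
  set (x := IZR j + INR s).
  destruct (zconv_minus _ _ (uR_conv (x + /2)) (uR_conv (x - /2))) as [C1 E1].
  set (w := fun k => uR (x + /2) k - uR (x - /2) k) in *.
  destruct (zshift_nat s w) as [A B].
  assert (Ew : forall k, w (k + Z.of_nat s)%Z = c (k + Z.of_nat s)%Z * Psi j k).
  { intros k. unfold w, uR, Psi. rewrite PI_bb, IZR_add_nat. unfold x.
    replace (tau * (IZR j + INR s + / 2 - (IZR k + INR s) * 1)) with (tau * (IZR j - IZR k + /2)) by ring.
    replace (tau * (IZR j + INR s - / 2 - (IZR k + INR s) * 1)) with (tau * (IZR j - IZR k - /2)) by ring.
    ring. }
  split. eapply zconv_ext. apply Ew. apply A, C1.
  unfold sigR. rewrite <- E1. rewrite <- (B C1). apply zsum_ext. apply Ew. Qed.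

Definition dd (lam : nat -> R) (k : Z) := rsum (fun s => lam s * c (k + Z.of_nat s)%Z) n.

Lemma Indep_d lam mu : (forall t, mu + rsum (fun s => lam s * sigR (t + INR s)) n = 0) ->
  forall j, zsum (fun k => dd lam k * Psi j k) = 0.
Proof. intros H j.
  assert (E : rsum (fun s => lam s * (sigR (IZR j + INR s + /2) - sigR (IZR j + INR s - /2))) n = 0).
  { assert (H1 := H (IZR j + /2)). assert (H2 := H (IZR j - /2)).
    rewrite (rsum_ext _ (fun s => lam s * sigR (IZR j + /2 + INR s) - lam s * sigR (IZR j - /2 + INR s))).
    rewrite rsum_minus. lra. intros s _.
    replace (IZR j + INR s + /2) with (IZR j + /2 + INR s) by ring.
    replace (IZR j + INR s - /2) with (IZR j - /2 + INR s) by ring. ring. }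
  set (u := fun s k => c (k + Z.of_nat s)%Z * Psi j k).
  rewrite (rsum_ext _ (fun s => lam s * zsum (u s))) in E.
  2:{ intros s _. f_equal. apply Dsig_shift. }
  destruct (zconv_rsum lam u n) as [_ E2]. intros s _. apply Dsig_shift.
  rewrite <- E2 in E. rewrite <- E. apply zsum_ext. intros k. unfold dd, u.
  rewrite Rmult_comm, <- rsum_scal. apply rsum_ext. intros; ring. Qed.

Lemma Psi_bound j m : Rabs (Psi j (m + j)) <= 4 * qq * exp (- 2 * tau) ^ (Z.abs_nat m).
Proof. unfold Psi. rewrite <- exp_tau.
  replace (IZR j - IZR (m + j)) with (IZR (- m)) by (rewrite opp_IZR, plus_IZR; ring).
  replace (Z.abs_nat m) with (Z.abs_nat (- m)) by lia.
  apply psi_bound, tau_pos. Qed.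

Lemma Psi_diag j : 1 <= Psi j j.
Proof. unfold Psi. replace (IZR j - IZR j - /2) with (- (IZR j - IZR j + /2)) by ring.
  rewrite Ropp_mult_distr_r_reverse, tanh_opp.
  assert (1/2 <= tanh (tau * (IZR j - IZR j + / 2))).
  { apply tanh_half. replace (2 * (tau * (IZR j - IZR j + / 2))) with tau by field.
    rewrite exp_tau. pose proof qq_gt. lra. }
  lra. Qed.

Lemma d_step (d : Z -> R) (S : R) : 0 <= S -> (forall k, Rabs (d k) <= S * K ^ (Z.abs_nat k)) ->
  (forall j, zsum (fun k => d k * Psi j k) = 0) ->
  forall j, Rabs (d j) <= S / 2 * K ^ (Z.abs_nat j).
Proof. intros HS Hd Hz j.
  destruct rr_facts as [R1 [R2 R3]].
  set (X := S * K ^ (Z.abs_nat j)).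
  assert (HX : 0 <= X) by (apply Rmult_le_pos; auto; apply pow_le; lra).
  set (v := fun m => d (m + j)%Z * Psi j (m + j)%Z).
  destruct (zgeom v (X * (4 * qq)) rr) as [Cv Bv]. lra.
  { intros m _. unfold v. rewrite Rabs_mult.
    assert (P := Psi_bound j m). assert (D := Hd (m + j)%Z).
    apply Rle_trans with (S * (K ^ Z.abs_nat j * K ^ Z.abs_nat m) * (4 * qq * exp (-2 * tau) ^ Z.abs_nat m)).
    apply Rmult_le_compat; try apply Rabs_pos; auto.
    eapply Rle_trans. apply D. apply Rmult_le_compat_l; auto. rewrite <- pow_add.
    apply Rle_pow; auto. lia.
    unfold X, rr. rewrite Rpow_mult_distr. right; ring. }
  unfold v in Bv, Cv. rewrite <- (zshift_Z j (fun k => d k * Psi j k) Cv), Hz in Bv.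
  simpl (0 + j)%Z in Bv.
  assert (P := Psi_diag j).
  assert (Rabs (d j) <= Rabs (d j * Psi j j)).
  { rewrite Rabs_mult. rewrite (Rabs_pos_eq (Psi j j)) by lra.
    pose proof (Rabs_pos (d j)). nra. }
  rewrite Rminus_0_l, Rabs_Ropp in Bv.
  eapply Rle_trans. apply H. eapply Rle_trans. apply Bv. fold X.
  replace (2 * (X * (4 * qq) * rr / (1 - rr))) with ((8 * X * (qq * rr)) / (1 - rr)) by (field; lra).
  apply div_le. lra. replace (S / 2 * K ^ Z.abs_nat j) with (X / 2) by (unfold X; field). assert (qq * rr <= 1/64) by lra. assert (rr <= 1/2) by lra. nra. Qed.

Lemma small_zero x C : 0 <= x -> 0 <= C -> (forall N, x <= C * (/2) ^ N) -> x = 0.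
Proof. intros Hx HC H. destruct (Rle_lt_or_eq_dec 0 x Hx) as [h|h]; auto.
  destruct (Rle_lt_or_eq_dec 0 C HC) as [h2|h2].
  - destruct (pow_lt_1_zero (/2) ltac:(rewrite Rabs_pos_eq; lra) (x / C)) as [N HN'].
    apply Rdiv_lt_0_compat; auto.
    specialize (HN' N (le_n N)). specialize (H N). rewrite Rabs_pos_eq in HN' by (apply pow_le; lra).
    assert (C * (/2) ^ N < x). { apply (Rmult_lt_compat_l C) in HN'; auto.
      replace (C * (x / C)) with x in HN' by (field; lra). auto. }
    lra.
  - specialize (H O). rewrite <- h2 in H. lra. Qed.

Lemma d_zero (d : Z -> R) (S : R) : 0 <= S -> (forall k, Rabs (d k) <= S * K ^ (Z.abs_nat k)) ->
  (forall j, zsum (fun k => d k * Psi j k) = 0) -> forall k, d k = 0.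
Proof. intros HS Hd Hz.
  assert (It : forall N k, Rabs (d k) <= (S * (/2) ^ N) * K ^ (Z.abs_nat k)).
  { induction N. intros k. simpl. rewrite Rmult_1_r. auto.
    intros k. eapply Rle_trans. apply (d_step d (S * (/2) ^ N)); auto.
    apply Rmult_le_pos; auto. apply pow_le; lra. right. simpl. field. }
  intros k. apply Rabs_eq_0. apply (small_zero _ (S * K ^ Z.abs_nat k)). apply Rabs_pos.
  apply Rmult_le_pos; auto. apply pow_le; lra.
  intros N. eapply Rle_trans. apply (It N k). right; ring. Qed.


Lemma dd_bound lam k : Rabs (dd lam k) <= (rsum (fun s => Rabs (lam s)) n * K ^ (n + n)) * K ^ (Z.abs_nat k).
Proof. unfold dd. eapply Rle_trans. apply rsum_abs.
  rewrite Rmult_assoc, Rmult_comm, <- rsum_scal. apply rsum_le. intros s Hs.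
  rewrite Rabs_mult, Rmult_comm. apply Rmult_le_compat_r. apply Rabs_pos.
  eapply Rle_trans. apply HK. rewrite <- pow_add. apply Rle_pow; auto. lia. Qed.

Lemma tri lam : (forall k, dd lam k = 0) -> forall p, (p < n)%nat -> lam p = 0.
Proof. intros Hd.
  assert (G : forall m p, (n - p = m)%nat -> (p < n)%nat -> lam p = 0).
  { intros m. induction m as [m IH] using lt_wf_ind. intros p Hm Hp.
    assert (E := Hd (Z.of_nat (n - 1 - p))). unfold dd in E.
    rewrite (rsum_single _ n p) in E. 2: auto.
    - unfold c in E. rewrite <- Nat2Z.inj_add, cc_init in E by lia. unfold winf in E.
      replace (Nat.eqb (n - 1 - p + p) (n - 1)) with true in E. lra.
      symmetry. apply Nat.eqb_eq. lia.
    - intros s Hs Hsp. destruct (Nat.lt_ge_cases s p) as [h|h].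
      + unfold c. rewrite <- Nat2Z.inj_add, cc_init by lia. unfold winf.
        replace (Nat.eqb (n - 1 - p + s) (n - 1)) with false. ring.
        symmetry. apply Nat.eqb_neq. lia.
      + rewrite (IH (n - s)%nat) by lia. ring. }
  intros p Hp. apply (G (n - p)%nat); auto. Qed.

Lemma Indep lam mu : (forall t, mu + rsum (fun s => lam s * sigR (t + INR s)) n = 0) ->
  (forall s, (s < n)%nat -> lam s = 0) /\ mu = 0.
Proof. intros H.
  assert (Hd : forall k, dd lam k = 0).
  { apply (d_zero (dd lam) (rsum (fun s => Rabs (lam s)) n * K ^ (n + n))).
    apply Rmult_le_pos. rewrite <- (rsum_zero (fun _ => 0) n) by auto. apply rsum_le. intros; apply Rabs_pos.
    apply pow_le; lra. apply dd_bound. apply (Indep_d lam mu H). }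
  assert (L := tri lam Hd). split; auto.
  specialize (H 0). rewrite rsum_zero in H. lra. intros s Hs. rewrite L; auto. ring. Qed.

Definition zeta0 := rsum (fun s => alpha s * sigR (0 + INR s)) (S n).

Lemma Sym0 t : rsum (fun s => alpha s * sigR (t + INR s)) (S n) = zeta0.
Proof. unfold zeta0. rewrite !Sym. reflexivity. Qed.

Lemma MainReal lam mu : (forall t, mu + rsum (fun s => lam s * sigR (t + INR s)) (S n) = 0) ->
  (forall s, (s <= n)%nat -> lam s = (lam n / alpha n) * alpha s) /\ mu = - (lam n / alpha n) * zeta0.
Proof. intros H. set (kap := lam n / alpha n).
  set (lam' := fun s => lam s - kap * alpha s).
  assert (H' : forall t, (mu + kap * zeta0) + rsum (fun s => lam' s * sigR (t + INR s)) n = 0).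
  { intros t. assert (E := H t). rewrite <- (Sym0 t).
    assert (E2 : rsum (fun s => lam' s * sigR (t + INR s)) (S n) =
       rsum (fun s => lam s * sigR (t + INR s)) (S n) - kap * rsum (fun s => alpha s * sigR (t + INR s)) (S n)).
    { rewrite <- rsum_scal, <- rsum_minus. apply rsum_ext. intros; unfold lam'; ring. }
    rewrite rsum_last in E2. replace (lam' n) with 0 in E2. lra.
    unfold lam', kap. field. auto. }
  destruct (Indep lam' _ H') as [A B]. split.
  - intros s Hs. destruct (Nat.eq_dec s n) as [->|h].
    unfold kap. field. auto.
    assert (lam' s = 0) by (apply A; lia). unfold lam' in *. lra.
  - lra. Qed.

End Main.

Lemma csum_ext f g m : (forall i, (i < m)%nat -> f i = g i) -> csum f m = csum g m.
Proof. induction m; simpl; intros H; auto. rewrite IHm, H; auto. Qed.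

Lemma fst_Cplus (a b : C) : fst (Cplus a b) = fst a + fst b.
Proof. reflexivity. Qed.
Lemma snd_Cplus (a b : C) : snd (Cplus a b) = snd a + snd b.
Proof. reflexivity. Qed.

Theorem proposition3 (n : nat) (alpha : nat -> R) :
  (1 <= n)%nat ->
  (forall k : nat, (k <= n)%nat -> alpha k <> 0) ->
  exists (b zeta : R) (sigma : R -> C),
    0 < b /\ in_Sigma 1 b sigma /\
    affine_symmetry sigma zeta (S n) alpha (fun _ => 1) (fun k => INR k).
Proof.
  intros Hn Ha. assert (H0 : alpha 0%nat <> 0) by (apply Ha; lia).
  assert (HN : alpha n <> 0) by (apply Ha; lia).
  destruct (cc_bound n alpha Hn H0 HN) as [K [HK1 HK]].
  exists (bb K), (zeta0 n alpha K), (fun t => RtoC (sigR n alpha K t)).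
  split. apply bb_pos; auto.
  split.
  -
    split. lra. split. apply bb_pos; auto.
    exists (RtoC 0), (fun k => RtoC (cc n alpha k)).
    split; [|split].
    + exists (/2). split. lra. exists (K ^ n). intros k. rewrite Cmod_R.
      assert (Et : exp (tau K / 2) * exp (tau K / 2) = 64 * (K * K)).
      { rewrite <- exp_plus. replace (tau K / 2 + tau K / 2) with (tau K) by field. apply exp_tau; auto. }
      assert (EK : K <= exp (tau K / 2)). { pose proof (exp_pos (tau K / 2)). nra. }
      replace (- PI * / 2 * IZR (Z.abs k) / bb K) with (INR (Z.abs_nat k) * (- (tau K / 2))).
      2:{ rewrite IZR_abs_nat. unfold bb. pose proof (tau_pos K HK1). pose proof PI_RGT_0. field. lra. }
      rewrite exp_nat, exp_Ropp.
      eapply Rle_trans. apply Rmult_le_compat_r. apply pow_le. left; apply Rinv_0_lt_compat, exp_pos.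
      apply HK. rewrite pow_add, Rmult_assoc, <- Rpow_mult_distr.
      rewrite <- (Rmult_1_r (K ^ n)) at 2. apply Rmult_le_compat_l. apply pow_le; lra.
      rewrite <- (pow1 (Z.abs_nat k)). apply pow_incr. pose proof (exp_pos (tau K / 2)). split.
      apply Rmult_le_pos. lra. left; apply Rinv_0_lt_compat; auto.
      apply (div_le 1 K); auto. lra.
    + exists (Z.of_nat (n - 1)). rewrite cc_init by lia. unfold winf. rewrite Nat.eqb_refl.
      intros h. injection h. lra.
    + intros t. exists (RtoC (sigR n alpha K t)). split.
      * destruct (uR_conv n alpha K HK1 HK t) as [C1 C2].
        exists (RtoC (Series (zpos (uR n alpha K t)))), (RtoC (Series (zneg (uR n alpha K t)))).
        split; [|split].
        -- eapply is_series_ext. 2: apply is_series_RtoC, Series_correct, C1.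
           intros m. unfold sigma_term, zpos, uR. rewrite RtoC_mult. reflexivity.
        -- eapply is_series_ext. 2: apply is_series_RtoC, Series_correct, C2.
           intros m. unfold sigma_term, zneg, uR. rewrite RtoC_mult. reflexivity.
        -- unfold sigR, zsum. rewrite RtoC_plus. reflexivity.
      * rewrite Cplus_0_l. reflexivity.
  -
    split. lia. split.
    + intros t. rewrite (csum_ext _ (fun s => RtoC (alpha s * sigR n alpha K (t + INR s)))).
      rewrite csum_RtoC, Sym0; auto.
      intros i _. rewrite Rmult_1_l, RtoC_mult. reflexivity.
    + intros [P [HP [[s0 [Hs0 HnP]] [lam [mu [Hout [Hnz Hrel]]]]]]].
      assert (Re : forall t, fst mu + rsum (fun s => fst (lam s) * sigR n alpha K (t + INR s)) (S n) = 0).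
      { intros t. assert (E := f_equal fst (Hrel t)). rewrite fst_Cplus, csum_Re in E. change (fst (RtoC 0)) with 0 in E.
        rewrite <- E. f_equal. apply rsum_ext. intros i _. simpl. rewrite Rmult_1_l. ring. }
      assert (Im : forall t, snd mu + rsum (fun s => snd (lam s) * sigR n alpha K (t + INR s)) (S n) = 0).
      { intros t. assert (E := f_equal snd (Hrel t)). rewrite snd_Cplus, csum_Im in E. change (snd (RtoC 0)) with 0 in E.
        rewrite <- E. f_equal. apply rsum_ext. intros i _. simpl. rewrite Rmult_1_l. ring. }
      destruct (MainReal n alpha Hn H0 HN K HK1 HK _ _ Re) as [A1 B1].
      destruct (MainReal n alpha Hn H0 HN K HK1 HK _ _ Im) as [A2 B2].
      assert (L0 : lam s0 = RtoC 0) by (apply Hout; auto).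
      assert (Hs0' : (s0 <= n)%nat) by lia.
      assert (Ha0 := Ha s0 Hs0').
      assert (k1 : fst (lam n) / alpha n = 0).
      { assert (E := A1 s0 Hs0'). rewrite L0 in E. simpl in E.
        destruct (Rmult_integral _ _ (eq_sym E)); auto. contradiction. }
      assert (k2 : snd (lam n) / alpha n = 0).
      { assert (E := A2 s0 Hs0'). rewrite L0 in E. simpl in E.
        destruct (Rmult_integral _ _ (eq_sym E)); auto. contradiction. }
      rewrite k1 in A1, B1. rewrite k2 in A2, B2.
      destruct Hnz as [Hm | [s [Hs [Ps Hl]]]].
      * apply Hm. destruct mu as [m1 m2]. simpl in *. rewrite B1, B2. unfold RtoC. f_equal; ring.
      * apply Hl. assert (E1 := A1 s ltac:(lia)). assert (E2 := A2 s ltac:(lia)).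
        destruct (lam s) as [l1 l2]. simpl in *. rewrite E1, E2. unfold RtoC. f_equal; ring.
Qed.
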